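(* Let $A$ be $\phi_A$-uniformly monotone and $B$ be $\phi_B$-uniformly monotone, let $x\in\operatorname{zer}(A+B)$, and let $(x_n)$, $(y_n)$, $(r_n)$ be generated by the reflected stochastic forward–backward iteration with step sizes $(\gamma_n)$. For every $n\ge 1$ set $$\epsilon_n=2\gamma_n\big(\phi_A(\|x_{n+1}-x\|)+\phi_A(\|x_{n+1}-x_n\|)+\phi_B(\|y_n-x\|)\big).$$ Then, for every $n\ge1$ (pointwise on $\Omega$), $$\|x_{n+1}-x\|^2+\epsilon_n+\Big(3-\frac{\gamma_n}{\gamma_{n-1}}\Big)\|x_{n+1}-x_n\|^2+\frac{\gamma_n}{\gamma_{n-1}}\|x_{n+1}-y_n\|^2+2\gamma_n\langle r_n-Bx,x_{n+1}-x_n\rangle$$ $$\le\|x_n-x\|^2+2\gamma_n\langle r_{n-1}-Bx,x_n-x_{n-1}\rangle+2\gamma_n\langle r_{n-1}-r_n,x_{n+1}-y_n\rangle+\frac{\gamma_n}{\gamma_{n-1}}\|x_n-y_n\|^2+2\gamma_n\langle r_n-By_n,x-y_n\rangle.$$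
   Context: $\mathcal H$ is a separable real Hilbert space with inner product $\langle\cdot,\cdot\rangle$ and norm $\|\cdot\|$; $(\Omega,\mathcal F,\mathsf P)$ is a probability space. $A:\mathcal H\to2^{\mathcal H}$ is maximally monotone and $B:\mathcal H\to\mathcal H$ is monotone and $\mu$-Lipschitz continuous. $\operatorname{zer}(A+B)=\{x:0\in Ax+Bx\}$. For $\gamma>0$, $J_{\gamma A}=(\mathrm{Id}+\gamma A)^{-1}$ is the resolvent. An operator $M$ is $\phi$-uniformly monotone, where $\phi:[0,\infty[\to[0,\infty]$ is increasing with $\phi(0)=0$ (the choice $\phi\equiv0$ corresponding to mere monotonicity), if $\langle x-y,u-v\rangle\ge\phi(\|x-y\|)$ for all $(x,u),(y,v)\in\operatorname{gra}M$. Reflected stochastic forward–backward iteration: $(\gamma_n)_{n\ge -1}$ is a sequence in $]0,+\infty[$, $x_0,x_{-1}$ are square-integrable $\mathcal H$-valued random variables, and for every $n\in\mathbb N$: $y_n=2x_n-x_{n-1}$; $r_n$ is an $\mathcal H$-valued random variable with $\mathsf E[r_n\mid\mathcal F_n]=By_n$, where $\mathcal F_n=\sigma(x_0,\dots,x_n)$; and $x_{n+1}=J_{\gamma_nA}(x_n-\gamma_nr_n)$. *)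

(* Defs.v *)
From HB Require Import structures.
From mathcomp Require Import all_boot all_order all_algebra.
From mathcomp Require Import all_classical all_reals all_analysis.
Set Implicit Arguments. Unset Strict Implicit. Unset Printing Implicit Defensive.
Import Order.TTheory GRing.Theory Num.Theory.
Import numFieldNormedType.Exports.
Local Open Scope classical_set_scope.
Local Open Scope ring_scope.

(* A real inner product on a (complete) normed space H whose norm is the one
   induced by the inner product.  Together with completeness of H this makes H
   a real Hilbert space. *)
Record inner_product (R : realType) (H : normedModType R) := InnerProduct {
  inner :> H -> H -> R;
  inner_sym : forall x y, inner x y = inner y x;
  inner_addl : forall x y z, inner (x + y) z = inner x z + inner y z;
  inner_scalel : forall (a : R) x y, inner (a *: x) y = a * inner x y;
  inner_pos : forall x, x != 0 -> 0 < inner x x;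
  inner_norm : forall x, `|x| = Num.sqrt (inner x x)
}.

Definition separable_space (T : topologicalType) : Prop :=
  exists D : set T, countable D /\ closure D = setT.

Section Operators.
Variables (R : realType) (H : normedModType R) (ip : inner_product H).

(* set-valued operators H -> 2^H are represented by their graph *)
Definition monotone_op (A : H -> set H) : Prop :=
  forall x y u v, A x u -> A y v -> 0 <= ip (x - y) (u - v).

Definition maximally_monotone (A : H -> set H) : Prop :=
  monotone_op A /\
  forall A' : H -> set H, monotone_op A' ->
    (forall x u, A x u -> A' x u) -> forall x u, A' x u -> A x u.

Definition monotone_fun (B : H -> H) : Prop :=
  forall x y, 0 <= ip (x - y) (B x - B y).

Definition lipschitz_with (mu : R) (B : H -> H) : Prop :=
  forall x y, `|B x - B y| <= mu * `|x - y|.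

Definition modulus (phi : R -> \bar R) : Prop :=
  phi 0 = 0%E /\
  (forall t, 0 <= t -> (0 <= phi t)%E) /\
  (forall s t, 0 <= s -> s <= t -> (phi s <= phi t)%E).

Definition unif_monotone_op (phi : R -> \bar R) (A : H -> set H) : Prop :=
  forall x y u v, A x u -> A y v -> (phi (`|x - y|)%R <= (ip (x - y) (u - v))%:E)%E.

Definition unif_monotone_fun (phi : R -> \bar R) (B : H -> H) : Prop :=
  forall x y, (phi (`|x - y|)%R <= (ip (x - y) (B x - B y))%:E)%E.

Definition zer_sum (A : H -> set H) (B : H -> H) (x : H) : Prop :=
  exists u, A x u /\ u + B x = 0.

(* graph of the resolvent J_{gA} = (Id + g A)^{-1}: p \in J_{gA} z iff z \in p + g A p *)
Definition resolvent (A : H -> set H) (g : R) (z p : H) : Prop :=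
  exists u, A p u /\ z = p + g *: u.

End Operators.

Section Random.
Variables (R : realType) (H : normedModType R) (ip : inner_product H).
Variables (d : measure_display) (Omega : measurableType d).

Definition measurable_wrt (G : set (set Omega)) (X : Omega -> H) : Prop :=
  forall U : set H, open U -> G (X @^-1` U).

Definition H_random_variable (X : Omega -> H) : Prop :=
  measurable_wrt measurable X.

Definition square_integrable (P : probability Omega R) (X : Omega -> H) : Prop :=
  H_random_variable X /\ (\int[P]_w ((`|X w| ^+ 2)%:E) < +oo)%E.

Definition H_integrable (P : probability Omega R) (X : Omega -> H) : Prop :=
  H_random_variable X /\ (\int[P]_w ((`|X w|)%:E) < +oo)%E.

Definition natural_filtration (x : int -> Omega -> H) (n : nat) : set (set Omega) :=
  <<s [set E | exists k : nat, (k <= n)%N /\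
               exists U : set H, open U /\ E = (x k) @^-1` U] >>.

(* Z = E[X | G] for H-valued integrable X (H separable, so Bochner
   integrability/conditional expectation is characterized weakly):
   Z is G-measurable, integrable, and for every E in G and every h in H,
   \int_E <X,h> dP = \int_E <Z,h> dP. *)
Definition is_cond_exp (P : probability Omega R) (G : set (set Omega))
    (X Z : Omega -> H) : Prop :=
  H_integrable P X /\ H_integrable P Z /\ measurable_wrt G Z /\
  forall E, G E -> forall h : H,
    (\int[P]_(w in E) (ip (X w) h)%:E = \int[P]_(w in E) (ip (Z w) h)%:E)%E.

End Random.

(* Main.v *)
Require Import Defs.
From HB Require Import structures.
From mathcomp Require Import all_boot all_order all_algebra.
From mathcomp Require Import all_classical all_reals all_analysis.
From mathcomp Require Import ring.
Import Order.TTheory GRing.Theory Num.Theory.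
Import numFieldNormedType.Exports.
Local Open Scope classical_set_scope.
Local Open Scope ring_scope.

Section IP.
Variables (R : realType) (H : normedModType R) (ip : inner_product H).

Lemma ipDr x y z : ip x (y + z) = ip x y + ip x z.
Proof. by rewrite inner_sym inner_addl !(@inner_sym _ _ ip _ x). Qed.

Lemma ipZr (a : R) x y : ip x (a *: y) = a * ip x y.
Proof. by rewrite inner_sym inner_scalel inner_sym. Qed.

Lemma ipNl x y : ip (- x) y = - ip x y.
Proof. by rewrite -scaleN1r inner_scalel mulN1r. Qed.

Lemma ipNr x y : ip x (- y) = - ip x y.
Proof. by rewrite inner_sym ipNl inner_sym. Qed.

Lemma ip_ge0 x : 0 <= ip x x.
Proof.
have [->|nz] := eqVneq x 0; last exact/ltW/inner_pos.
by rewrite -(scale0r (0 : H)) inner_scalel mul0r.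
Qed.

Lemma nsq x : `|x| ^+ 2 = ip x x.
Proof. by rewrite (inner_norm ip) sqr_sqrtr // ip_ge0. Qed.
End IP.

Theorem mainTheorem2
  (R : realType) (H : completeNormedModType R) (ip : inner_product H)
  (Hsep : separable_space H)
  (d : measure_display) (Omega : measurableType d) (P : probability Omega R)
  (A : H -> set H) (B : H -> H) (mu : R)
  (hA : maximally_monotone ip A)
  (hB : monotone_fun ip B) (hmu : 0 <= mu) (hBL : lipschitz_with mu B)
  (phiA phiB : R -> \bar R) (hphiA : modulus phiA) (hphiB : modulus phiB)
  (hAu : unif_monotone_op ip phiA A) (hBu : unif_monotone_fun ip phiB B)
  (xstar : H) (hxstar : zer_sum A B xstar)
  (gamma : int -> R) (hgamma : forall n : int, (-1 <= n)%R -> 0 < gamma n)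
  (x : int -> Omega -> H) (y r : nat -> Omega -> H)
  (hx0 : square_integrable P (x 0%Z)) (hxm1 : square_integrable P (x (-1)%Z))
  (hy : forall (n : nat) w, y n w = 2 *: x n w - x (n%:Z - 1) w)
  (hr : forall n : nat, H_random_variable (r n) /\
          is_cond_exp ip P (natural_filtration x n) (r n) (fun w => B (y n w)))
  (hiter : forall (n : nat) w,
     resolvent A (gamma n) (x n w - gamma n *: r n w) (x n.+1 w)) :
  forall (n : nat), (1 <= n)%N -> forall w : Omega,
  let eps := ((2 * gamma n)%:E *
     (phiA (`|x n.+1 w - xstar|)%R + phiA (`|x n.+1 w - x n w|)%R + phiB (`|y n w - xstar|)%R))%E in
  let rho := gamma n / gamma (n%:Z - 1) in
  ((`|x n.+1 w - xstar| ^+ 2)%:E + eps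
    + ((3 - rho) * `|x n.+1 w - x n w| ^+ 2
       + rho * `|x n.+1 w - y n w| ^+ 2
       + 2 * gamma n * ip (r n w - B xstar) (x n.+1 w - x n w))%:E
  <= (`|x n w - xstar| ^+ 2
      + 2 * gamma n * ip (r n.-1 w - B xstar) (x n w - x n.-1 w)
      + 2 * gamma n * ip (r n.-1 w - r n w) (x n.+1 w - y n w)
      + rho * `|x n w - y n w| ^+ 2
      + 2 * gamma n * ip (r n w - B (y n w)) (xstar - y n w))%:E)%E.
Proof.
move=> [|m] hn w; first by rewrite ltn0 in hn.
cbv zeta; rewrite /=.
have E : (m.+1%:Z - 1 = m%:Z)%R by rewrite -addn1 PoszD addrK.
rewrite E.
have [u1 [Au1 e1]] := hiter m.+1 w.
have [u0 [Au0 e0]] := hiter m w.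
have [us [Aus es]] := hxstar.
have h1 := hAu _ _ _ _ Au1 Aus.
have h2 := hAu _ _ _ _ Au1 Au0.
have h3 := hBu (y m.+1 w) xstar.
have g1 : 0 < gamma m.+1 by apply: hgamma.
have g0 : 0 < gamma m by apply: hgamma.
have heps : ((2 * gamma m.+1)%:E * (phiA (`|x m.+2 w - xstar|)%R +
   phiA (`|x m.+2 w - x m.+1 w|)%R + phiB (`|y m.+1 w - xstar|)%R) <=
   ((2 * gamma m.+1) * (ip (x m.+2 w - xstar) (u1 - us) +
     ip (x m.+2 w - x m.+1 w) (u1 - u0) +
     ip (y m.+1 w - xstar) (B (y m.+1 w) - B xstar)))%R%:E)%E.
  rewrite (EFinM (2 * gamma m.+1)); apply: lee_wpmul2l.
    by rewrite lee_fin mulr_ge0 // ltW.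
  by rewrite !EFinD; apply: leeD; [apply: leeD|].
apply: le_trans (leeD2r _ (leeD2l _ heps)) _.
rewrite -!EFinD lee_fin le_eqVlt; apply/orP; left; apply/eqP.
have U1 : u1 = (gamma m.+1)^-1 *: (x m.+1 w - gamma m.+1 *: r m.+1 w - x m.+2 w).
  by rewrite e1 addrAC subrr add0r scalerA mulVf ?scale1r // gt_eqF.
have U0 : u0 = (gamma m)^-1 *: (x m w - gamma m *: r m w - x m.+1 w).
  by rewrite e0 addrAC subrr add0r scalerA mulVf ?scale1r // gt_eqF.
have US : us = - B xstar by rewrite -(addrK (B xstar) us) es sub0r.
rewrite U1 U0 US.
set c := B (y m.+1 w).
rewrite hy E.
set p := x m.+2 w. set q := x m.+1 w. set s := x m w.
set r1 := r m.+1 w. set r0 := r m w. set b := B xstar.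
set g := gamma m.+1. set g' := gamma m.
rewrite !(@nsq _ _ ip).
rewrite !(inner_addl, ipDr, ipNl, ipNr, inner_scalel, ipZr).
rewrite ?(@inner_sym _ _ ip q p) ?(@inner_sym _ _ ip s p) ?(@inner_sym _ _ ip xstar p)
  ?(@inner_sym _ _ ip r1 p) ?(@inner_sym _ _ ip r0 p) ?(@inner_sym _ _ ip b p) ?(@inner_sym _ _ ip c p)
  ?(@inner_sym _ _ ip s q) ?(@inner_sym _ _ ip xstar q)
  ?(@inner_sym _ _ ip r1 q) ?(@inner_sym _ _ ip r0 q) ?(@inner_sym _ _ ip b q) ?(@inner_sym _ _ ip c q)
  ?(@inner_sym _ _ ip xstar s)
  ?(@inner_sym _ _ ip r1 s) ?(@inner_sym _ _ ip r0 s) ?(@inner_sym _ _ ip b s) ?(@inner_sym _ _ ip c s)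
  ?(@inner_sym _ _ ip r1 xstar) ?(@inner_sym _ _ ip r0 xstar) ?(@inner_sym _ _ ip b xstar) ?(@inner_sym _ _ ip c xstar)
  ?(@inner_sym _ _ ip r0 r1) ?(@inner_sym _ _ ip b r1) ?(@inner_sym _ _ ip c r1)
  ?(@inner_sym _ _ ip b r0) ?(@inner_sym _ _ ip c r0) ?(@inner_sym _ _ ip c b).
have gn : g != 0 by rewrite gt_eqF.
have gn' : g' != 0 by rewrite gt_eqF.
clearbody p q s r1 r0 b c g g'.
field.
by rewrite gn gn'.
Qed.
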